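(* Let $n\ge1$. A valid configuration in $\Omega'_n$ contains neither of the junction tiles $j_n^{0,0,1,1}$ and $j_n^{1,1,0,0}$.
   Context: $V_n=\{(v_0,v_1,v_2)\in\mathbb{Z}^3: 0\le v_0\le v_1\le 1,\ v_1\le v_2\le n+1\}$, elements written as words $v_0v_1v_2$. A Wang tile is $t=(a,b,c,d)$ with $\mathrm{RIGHT}(t)=a$, $\mathrm{TOP}(t)=b$, $\mathrm{LEFT}(t)=c$, $\mathrm{BOTTOM}(t)=d$; $\hat t=(b,a,d,c)$, $\hat S=\{\hat t:t\in S\}$. Define (as (right, top, left, bottom)): $W_n=\{(11(i+1),11(j+1),11i,11j):1\le i,j\le n\}$; $B'_n=\{(00(i+1),111,00i,11n):0\le i\le n\}$; $G_n=\{(01(i+1),111,00i,11(n+1)):0\le i\le n\}$; $Y_n=\{(01(i+1),112,01i,11(n+1)):1\le i\le n\}$; $A_n=\{(00(i+1),112,01i,11n):1\le i\le n\}$; $j_n^{k,l,r,s}=((0,k,l),(0,r,s),(0,s,r+n),(0,l,k+n))$ for $(k,l),(r,s)\in\{(0,0),(0,1),(1,1)\}$ (so $j_n^{0,0,1,1}=(000,011,01(n+1),00n)$ and $j_n^{1,1,0,0}=(011,000,00n,01(n+1))$); $J'_n$ is the set of these 9 tiles. $\mathcal T'_n=W_n\cup B'_n\cup G_n\cup Y_n\cup A_n\cup\hat B'_n\cup\hat G_n\cup\hat Y_n\cup\hat A_n\cup J'_n$. $\Omega'_n$ is the set of configurations $c:\mathbb Z^2\to\mathcal T'_n$ with $\mathrm{RIGHT}(c(\mathbf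 m))=\mathrm{LEFT}(c(\mathbf m+\mathbf e_1))$ and $\mathrm{TOP}(c(\mathbf m))=\mathrm{BOTTOM}(c(\mathbf m+\mathbf e_2))$ for all $\mathbf m$. *)

(* Defs.v *)
From Stdlib Require Import ZArith Arith.

(* Labels v0 v1 v2 written as words; V_n membership. *)
Definition label := (nat * nat * nat)%type.
Definition V (n : nat) (v : label) : Prop :=
  let '(v0, v1, v2) := v in v0 <= v1 <= 1 /\ v1 <= v2 <= n + 1.

(* Wang tile t = (a,b,c,d) = (RIGHT, TOP, LEFT, BOTTOM). *)
Record tile := mkTile { RIGHT : label; TOP : label; LEFT : label; BOTTOM : label }.

Definition hat (t : tile) : tile := mkTile (TOP t) (RIGHT t) (BOTTOM t) (LEFT t).
Definition hatS (S : tile -> Prop) (t : tile) : Prop := exists t', S t' /\ t = hat t'.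

Definition W (n : nat) (t : tile) : Prop := exists i j, 1 <= i <= n /\ 1 <= j <= n /\
  t = mkTile (1,1,i+1) (1,1,j+1) (1,1,i) (1,1,j).
Definition B' (n : nat) (t : tile) : Prop := exists i, 0 <= i <= n /\
  t = mkTile (0,0,i+1) (1,1,1) (0,0,i) (1,1,n).
Definition G (n : nat) (t : tile) : Prop := exists i, 0 <= i <= n /\
  t = mkTile (0,1,i+1) (1,1,1) (0,0,i) (1,1,n+1).
Definition Y (n : nat) (t : tile) : Prop := exists i, 1 <= i <= n /\
  t = mkTile (0,1,i+1) (1,1,2) (0,1,i) (1,1,n+1).
Definition A (n : nat) (t : tile) : Prop := exists i, 1 <= i <= n /\
  t = mkTile (0,0,i+1) (1,1,2) (0,1,i) (1,1,n).

Definition jt (n k l r s : nat) : tile :=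
  mkTile (0,k,l) (0,r,s) (0,s,r+n) (0,l,k+n).
Definition kl_ok (k l : nat) : Prop :=
  (k, l) = (0, 0) \/ (k, l) = (0, 1) \/ (k, l) = (1, 1).
Definition J' (n : nat) (t : tile) : Prop :=
  exists k l r s, kl_ok k l /\ kl_ok r s /\ t = jt n k l r s.

Definition T' (n : nat) (t : tile) : Prop :=
  W n t \/ B' n t \/ G n t \/ Y n t \/ A n t \/
  hatS (B' n) t \/ hatS (G n) t \/ hatS (Y n) t \/ hatS (A n) t \/ J' n t.

Definition Omega' (n : nat) (c : Z * Z -> tile) : Prop :=
  forall m1 m2 : Z,
    T' n (c (m1, m2)) /\
    RIGHT (c (m1, m2)) = LEFT (c ((m1 + 1)%Z, m2)) /\
    TOP (c (m1, m2)) = BOTTOM (c (m1, (m2 + 1)%Z)).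

(* Main.v *)
Require Import Defs.
From Stdlib Require Import ZArith Arith Lia.

Ltac brk := repeat match goal with
  | H : exists _, _ |- _ => destruct H
  | H : _ /\ _ |- _ => destruct H
  | H : _ \/ _ |- _ => destruct H
  | H : (_, _) = (_, _) |- _ => injection H; clear H; intros
  end; subst; simpl in *.

Ltac tcase H := unfold T', W, B', G, Y, A, hatS, J', kl_ok, jt in H; brk.

Lemma T1 n t b k : T' n t -> LEFT t = (0,b,k) -> k < n ->
  fst (fst (TOP t)) = 1 /\ exists b', RIGHT t = (0,b',k+1).
Proof. intros H HL Hk; tcase H; brk; try lia;
  repeat split; eexists; f_equal; lia. Qed.

Lemma T1z n t : T' n t -> LEFT t = (0,0,0) -> 1 <= n ->
  TOP t = (1,1,1) /\ exists b', RIGHT t = (0,b',1).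
Proof. intros H HL Hk; tcase H; brk; try lia;
  repeat split; eexists; f_equal; lia. Qed.

Lemma T2 n t k : T' n t -> LEFT t = (1,1,k) -> fst (fst (BOTTOM t)) = 1 ->
  1 <= k <= n /\ RIGHT t = (1,1,k+1).
Proof. intros H HL HB; tcase H; brk; try lia; split; try lia; f_equal; lia. Qed.

Lemma T3 n t : T' n t -> BOTTOM t = (0,1,1) -> 1 <= n ->
  RIGHT t = (1,1,2) \/ (n = 1 /\ RIGHT t = (0,0,1)).
Proof. intros H HB Hn; tcase H; brk; try lia; auto;
  try (right; split; [lia| f_equal; lia]); try (left; f_equal; lia). Qed.

Lemma T4 t : T' 1 t -> LEFT t = (0,0,1) -> BOTTOM t = (1,1,1) -> RIGHT t = (0,0,2).
Proof. intros H HL HB; tcase H; brk; try lia; auto. Qed.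

Lemma T5 t : T' 1 t -> LEFT t = (0,0,2) -> False.
Proof. intros H HL; tcase H; brk; try lia. Qed.

Lemma no_j0011 n (hn : 1 <= n) c (hc : Omega' n c) m1 m2 :
  c (m1, m2) <> jt n 0 0 1 1.
Proof.
  intro E.
  assert (HR : LEFT (c ((m1+1)%Z, m2)) = (0,0,0)).
  { destruct (hc m1 m2) as [_ [<- _]]. rewrite E. reflexivity. }
  assert (HT : BOTTOM (c (m1, (m2+1)%Z)) = (0,1,1)).
  { destruct (hc m1 m2) as [_ [_ <-]]. rewrite E. reflexivity. }
  destruct (hc (m1+1)%Z m2) as [T10 [R10 U10]].
  destruct (T1z n _ T10 HR hn) as [Top10 [b1 Ri10]].
  destruct (hc m1 (m2+1)%Z) as [T01 [R01 U01]].
  destruct (hc (m1+1)%Z (m2+1)%Z) as [T11 [R11 U11]].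
  assert (B11 : BOTTOM (c ((m1+1)%Z, (m2+1)%Z)) = (1,1,1)) by (rewrite <- U10; exact Top10).
  destruct (T3 n _ T01 HT hn) as [H01 | [Hn1 H01]].
  -
    assert (Q : forall x, 1 <= x <= n ->
      (exists b, LEFT (c ((m1 + Z.of_nat x)%Z, m2)) = (0,b,x-1)) /\
      LEFT (c ((m1 + Z.of_nat x)%Z, (m2+1)%Z)) = (1,1,x+1)).
    { induction x as [|x IH]; intros Hx; [lia|].
      destruct (Nat.eq_dec x 0) as [->|Hx0].
      + simpl. replace (m1 + 1)%Z with (m1 + 1)%Z by lia. split.
        * exists 0. exact HR.
        * rewrite <- R01. exact H01.
      + destruct IH as [[b Hb] Hl]; [lia|].
        destruct (hc (m1 + Z.of_nat x)%Z m2) as [Ta [Ra Ua]].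
        destruct (hc (m1 + Z.of_nat x)%Z (m2+1)%Z) as [Tb [Rb Ub]].
        destruct (T1 n _ b (x-1) Ta Hb ltac:(lia)) as [Tp [b' Hr]].
        assert (FB : fst (fst (BOTTOM (c ((m1 + Z.of_nat x)%Z, (m2 + 1)%Z)))) = 1).
        { rewrite <- Ua. exact Tp. }
        destruct (T2 n _ _ Tb Hl FB) as [_ Hr2].
        replace (m1 + Z.of_nat (S x))%Z with (m1 + Z.of_nat x + 1)%Z by lia.
        split.
        * exists b'. rewrite <- Ra, Hr. f_equal. lia.
        * rewrite <- Rb, Hr2. f_equal. lia. }
    destruct (Q n ltac:(lia)) as [[b Hb] Hl].
    destruct (hc (m1 + Z.of_nat n)%Z m2) as [Ta [Ra Ua]].
    destruct (hc (m1 + Z.of_nat n)%Z (m2+1)%Z) as [Tb [Rb Ub]].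
    assert (FB : fst (fst (BOTTOM (c ((m1 + Z.of_nat n)%Z, (m2 + 1)%Z)))) = 1).
    { rewrite <- Ua. exact (proj1 (T1 n _ b (n-1) Ta Hb ltac:(lia))). }
    destruct (T2 n _ _ Tb Hl FB) as [Hk _]. lia.
  - subst n.
    rewrite R01 in H01.
    pose proof (T4 _ T11 H01 B11) as H2.
    rewrite R11 in H2.
    destruct (hc (m1+1+1)%Z (m2+1)%Z) as [T21 _].
    exact (T5 _ T21 H2).
Qed.

Lemma hat_hat t : hat (hat t) = t.
Proof. destruct t; reflexivity. Qed.

Lemma T'_hat n t : T' n t -> T' n (hat t).
Proof.
  unfold T'; intros H.
  destruct H as [H|[H|[H|[H|[H|[H|[H|[H|[H|H]]]]]]]]].
  - left. destruct H as [i [j [Hi [Hj ->]]]]. exists j, i. auto.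
  - right; right; right; right; right; left. exists t; auto.
  - right; right; right; right; right; right; left. exists t; auto.
  - right; right; right; right; right; right; right; left. exists t; auto.
  - right; right; right; right; right; right; right; right; left. exists t; auto.
  - destruct H as [t' [Ht ->]]. rewrite hat_hat. right; left; auto.
  - destruct H as [t' [Ht ->]]. rewrite hat_hat. right; right; left; auto.
  - destruct H as [t' [Ht ->]]. rewrite hat_hat. right; right; right; left; auto.
  - destruct H as [t' [Ht ->]]. rewrite hat_hat. right; right; right; right; left; auto.
  - repeat right. destruct H as [k [l [r [s [Hkl [Hrs ->]]]]]].
    exists r, s, k, l. auto.
Qed.

Theorem lemma7p3 (n : nat) (hn : 1 <= n) (c : Z * Z -> tile) (hc : Omega' n c) :
  forall m : Z * Z, c m <> jt n 0 0 1 1 /\ c m <> jt n 1 1 0 0.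
Proof.
  intros [m1 m2]. split.
  - apply no_j0011; auto.
  - intro E.
    set (c' := fun m : Z * Z => hat (c (snd m, fst m))).
    assert (hc' : Omega' n c').
    { intros a b. unfold c'; simpl.
      destruct (hc b a) as [Ht [Hr Hu]].
      destruct (hc b (a+1)%Z) as [_ _].
      split; [apply T'_hat; auto|]. simpl. split; auto. }
    apply (no_j0011 n hn c' hc' m2 m1).
    unfold c'; simpl. rewrite E. reflexivity.
Qed.
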